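(* Consider the Saint-Venant–Exner system with state $\mathbf{u}=(h,hv,b)^T$, $h>0$, velocity $v=hv/h$, constants $g>0$, $r>0$, a $C^1$ sediment discharge $q_b=q_b(h,hv)$ and a function $h_b=h_b(h,hv)$ with $q_b=v\,h_b$. Let $$\mathbf{f}(\mathbf{u})=(hv,\;hv^2,\;q_b)^T,\qquad \mathbf{B}(\mathbf{u})=\begin{pmatrix}0&0&0\\ g(h+h_b)&0&g(h+\tfrac1r h_b)\\0&0&0\end{pmatrix},\qquad \mathbf{z}(\mathbf{u})=(h,h_b,b)^T,$$ entropy $S=\tfrac12 rhv^2+\tfrac12 g(rh^2+b^2)+rghb$, entropy flux $q=rhv(\tfrac{v^2}{2}+g(h+b))+gq_b(rh+b)$, entropy variables $\mathbf{w}=(r(g(h+b)-\tfrac{v^2}{2}),\;rv,\;g(rh+b))^T$, and $\mathbf{A}=\mathbf{f}_{\mathbf{u}}+\mathbf{B}$. Define $$\mathbf{f}^*(\mathbf{u}_L,\mathbf{u}_R)=\big(\{\!\{hv\}\!\},\;\{\!\{hv\}\!\}\{\!\{v\}\!\},\;\{\!\{q_b\}\!\}\big)^T,$$ $$\mathbf{D}^-(\mathbf{u}_L,\mathbf{u}_R)=\tfrac12\mathbf{B}(\mathbf{u}_L)[\![\mathbf{z}]\!]+\mathbf{f}^*-\mathbf{f}(\mathbf{u}_L),\qquad \mathbf{D}^+(\mathbf{u}_L,\mathbf{u}_R)=\tfrac12\mathbf{B}(\mathbf{u}_R)[\![\mathbf{z}]\!]+\mathbf{f}(\mathbf{u}_R)-\mathbf{f}^*.$$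 Then for all admissible $\mathbf{u},\mathbf{u}_L,\mathbf{u}_R$: (i) $\mathbf{D}^\pm(\mathbf{u},\mathbf{u})=0$; (ii) $\mathbf{D}^-(\mathbf{u}_L,\mathbf{u}_R)=-\mathbf{D}^+(\mathbf{u}_R,\mathbf{u}_L)$; (iii) $\mathbf{w}(\mathbf{u}_L)^T\mathbf{D}^-(\mathbf{u}_L,\mathbf{u}_R)+\mathbf{w}(\mathbf{u}_R)^T\mathbf{D}^+(\mathbf{u}_L,\mathbf{u}_R)=q(\mathbf{u}_R)-q(\mathbf{u}_L)$; (iv) $\frac{\partial\mathbf{D}^-(\mathbf{u}_L,\mathbf{u}_R)}{\partial\mathbf{u}_R}\big|_{\mathbf{u}_R=\mathbf{u}_L}=\frac12\mathbf{A}(\mathbf{u}_L)$; (v) $\mathbf{D}^-+\mathbf{D}^+=[\![\mathbf{f}]\!]+\tfrac12(\mathbf{B}(\mathbf{u}_L)+\mathbf{B}(\mathbf{u}_R))[\![\mathbf{z}]\!]$, whose second component equals $g(\{\!\{h\}\!\}+\{\!\{h_b\}\!\})[\![h]\!]+g(\{\!\{h\}\!\}+\tfrac1r\{\!\{h_b\}\!\})[\![b]\!]$.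
   Context: Notation: for a quantity $a$ evaluated at two states, $[\![a]\!]=a_R-a_L$ and $\{\!\{a\}\!\}=\tfrac12(a_L+a_R)$. The system written is $\mathbf{u}_t+\mathbf{f}(\mathbf{u})_x+\mathbf{B}(\mathbf{u})\mathbf{u}_x=0$ (friction source omitted), i.e. $h_t+(hv)_x=0$, $(hv)_t+(hv^2)_x+gh(h+b)_x+\frac1r gh_b(rh+b)_x=0$, $b_t+(q_b)_x=0$; $h$ is water height, $b$ sediment height, $r$ the fluid/sediment density ratio, $h_b$ the active sediment height. *)

(* Defs.v *)
From Stdlib Require Import Reals.
From Coquelicot Require Import Coquelicot.
Open Scope R_scope.

Inductive idx := I1 | I2 | I3.

Definition vec := idx -> R.
Definition mat := idx -> idx -> R.

Definition mk3 (a b c : R) : vec :=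
  fun i => match i with I1 => a | I2 => b | I3 => c end.

Definition matvec (M : mat) (x : vec) : vec :=
  fun i => M i I1 * x I1 + M i I2 * x I2 + M i I3 * x I3.

Definition dot (x y : vec) : R := x I1 * y I1 + x I2 * y I2 + x I3 * y I3.

Definition unitv (j : idx) : vec := fun i => if (match i, j with
  | I1, I1 | I2, I2 | I3, I3 => true | _, _ => false end) then 1 else 0.
Definition shift (u : vec) (j : idx) (t : R) : vec := fun i => u i + t * unitv j i.

Definition jump (aL aR : R) : R := aR - aL.
Definition avg (aL aR : R) : R := (aL + aR) / 2.

Definition hh (u : vec) : R := u I1.
Definition hv (u : vec) : R := u I2.
Definition bb (u : vec) : R := u I3.
Definition vel (u : vec) : R := hv u / hh u.

Definition admissible (u : vec) : Prop := 0 < hh u.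

Section SVE.
Variables (g r : R) (qb hb : R -> R -> R).

Definition qbu (u : vec) : R := qb (hh u) (hv u).
Definition hbu (u : vec) : R := hb (hh u) (hv u).

Definition flux (u : vec) : vec := mk3 (hv u) (hv u * vel u) (qbu u).

Definition Bmat (u : vec) : mat := fun i j =>
  match i, j with
  | I2, I1 => g * (hh u + hbu u)
  | I2, I3 => g * (hh u + / r * hbu u)
  | _, _ => 0
  end.

Definition zvar (u : vec) : vec := mk3 (hh u) (hbu u) (bb u).

Definition entropy (u : vec) : R :=
  / 2 * r * hh u * vel u ^ 2 + / 2 * g * (r * hh u ^ 2 + bb u ^ 2) + r * g * hh u * bb u.

Definition eflux (u : vec) : R :=
  r * hv u * (vel u ^ 2 / 2 + g * (hh u + bb u)) + g * qbu u * (r * hh u + bb u).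

Definition wvar (u : vec) : vec :=
  mk3 (r * (g * (hh u + bb u) - vel u ^ 2 / 2)) (r * vel u) (g * (r * hh u + bb u)).

Definition flux_jac (u : vec) : mat := fun i j =>
  Derive (fun t => flux (shift u j t) i) 0.
Definition Amat (u : vec) : mat := fun i j => flux_jac u i j + Bmat u i j.

Definition jumpz (uL uR : vec) : vec := fun i => jump (zvar uL i) (zvar uR i).

Definition fstar (uL uR : vec) : vec :=
  mk3 (avg (hv uL) (hv uR))
      (avg (hv uL) (hv uR) * avg (vel uL) (vel uR))
      (avg (qbu uL) (qbu uR)).

Definition DminusSVE (uL uR : vec) : vec := fun i =>
  / 2 * matvec (Bmat uL) (jumpz uL uR) i + fstar uL uR i - flux uL i.

Definition DplusSVE (uL uR : vec) : vec := fun i =>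
  / 2 * matvec (Bmat uR) (jumpz uL uR) i + flux uR i - fstar uL uR i.

End SVE.

Definition C1_on_admissible (qb : R -> R -> R) : Prop :=
  forall h m, 0 < h ->
    ex_derive (fun x => qb x m) h /\ ex_derive (fun y => qb h y) m /\
    continuity_2d_pt (fun x y => Derive (fun x' => qb x' y) x) h m /\
    continuity_2d_pt (fun x y => Derive (fun y' => qb x y') y) h m.

(* Main.v *)
Require Import Defs.
From Stdlib Require Import Reals Lra.
From Coquelicot Require Import Coquelicot.
Open Scope R_scope.

Ltac fixDer := match goal with |- context [Derive ?f ?x] =>
  let HF := fresh in eassert (HF : is_derive f x _);
  [ auto_derive; [ repeat split; lra | reflexivity ] | rewrite (is_derive_unique f x _ HF) ] end.

Lemma D2 g r qb hb uL uR : DminusSVE g r qb hb uL uR I2 =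
  / 2 * (g * (hh uL + hbu hb uL) * (hh uR - hh uL) + g * (hh uL + / r * hbu hb uL) * (bb uR - bb uL))
  + (hv uL + hv uR) / 2 * ((hv uL / hh uL + hv uR / hh uR) / 2) - hv uL * (hv uL / hh uL).
Proof. unfold DminusSVE, flux, fstar, matvec, Bmat, jumpz, zvar, mk3, jump, avg, vel. simpl. ring. Qed.

Lemma t1 (uL : vec) (g r: R) (qb hb : R -> R -> R) : 0 < r -> 0 < hh uL -> forall j,
      is_derive (fun t => DminusSVE g r qb hb uL (shift uL j t) I2) 0
                (/ 2 * Amat g r qb hb uL I2 j).
Proof.
intros Hr H j. eapply is_derive_ext. { intro t. symmetry. apply D2. }
unfold hh in H.
destruct j; unfold Amat, flux_jac, flux, matvec, Bmat, mk3, shift, unitv, vel, hh, hv, bb; simpl;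
 fixDer; auto_derive. all: try (repeat split; lra). all: try (field; repeat split; lra). 
Qed.
Lemma aff (F : R -> R) c d : is_derive F 0 d -> is_derive (fun t => (c + F t)/2 - c) 0 (/2*(d+0)).
Proof. intro H. assert (E: ex_derive F 0) by (eexists; eauto).
 rewrite <- (is_derive_unique _ _ _ H). auto_derive. auto. change (Derive (fun x => F x) 0) with (Derive F 0). ring. Qed.
Lemma D1 g r qb hb uL uR : DminusSVE g r qb hb uL uR I1 = (hv uL + hv uR)/2 - hv uL.
Proof. unfold DminusSVE, flux, fstar, matvec, Bmat, jumpz, zvar, mk3, jump, avg, vel. simpl. ring. Qed.

Lemma D3 g r qb hb uL uR : DminusSVE g r qb hb uL uR I3 = (qbu qb uL + qbu qb uR)/2 - qbu qb uL.
Proof. unfold DminusSVE, flux, fstar, matvec, Bmat, jumpz, zvar, mk3, jump, avg, vel. simpl. ring. Qed.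

Lemma t3 (uL : vec) (g r: R) (qb hb : R -> R -> R) : C1_on_admissible qb -> 0 < hh uL -> forall j,
      is_derive (fun t => DminusSVE g r qb hb uL (shift uL j t) I3) 0
                (/ 2 * Amat g r qb hb uL I3 j).
Proof.
intros HC H j. eapply is_derive_ext. { intro t. symmetry. apply D3. }
unfold Amat, flux_jac.
replace (Bmat g r hb uL I3 j) with 0 by (destruct j; reflexivity).
apply aff. apply Derive_correct.
destruct (HC (hh uL) (hv uL) H) as [Hx [Hy _]].
unfold flux, mk3, qbu, shift, unitv. unfold hh, hv in *.
destruct j; simpl.
- apply (ex_derive_ext (fun t => qb (uL I1 + t) (uL I2))). { intro; f_equal; ring. }
  apply (ex_derive_comp (fun x => qb x (uL I2)) (fun t => uL I1 + t)).
  + rewrite Rplus_0_r; exact Hx.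
  + auto_derive; auto.
- apply (ex_derive_ext (fun t => qb (uL I1) (uL I2 + t))). { intro; f_equal; ring. }
  apply (ex_derive_comp (fun y => qb (uL I1) y) (fun t => uL I2 + t)).
  + rewrite Rplus_0_r; exact Hy.
  + auto_derive; auto.
- apply (ex_derive_ext (fun t => qb (uL I1) (uL I2))). { intro; f_equal; ring. }
  auto_derive; auto.
Qed.

Lemma t1b (uL : vec) (g r: R) (qb hb : R -> R -> R) : forall j,
      is_derive (fun t => DminusSVE g r qb hb uL (shift uL j t) I1) 0
                (/ 2 * Amat g r qb hb uL I1 j).
Proof.
intros j. eapply is_derive_ext. { intro t. symmetry. apply D1. }
destruct j; unfold Amat, flux_jac, flux, matvec, Bmat, mk3, shift, unitv, vel, hh, hv, bb; simpl;
 fixDer; auto_derive; auto; ring.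
Qed.

Lemma p3 g r qb hb uL uR : 0 < r -> (forall h m, 0 < h -> qb h m = (m / h) * hb h m) ->
  admissible uL -> admissible uR ->
      dot (wvar g r uL) (DminusSVE g r qb hb uL uR)
      + dot (wvar g r uR) (DplusSVE g r qb hb uL uR)
      = eflux g r qb uR - eflux g r qb uL.
Proof.
intros Hr Hq HL HR. unfold admissible in *.
unfold dot, wvar, eflux, DminusSVE, DplusSVE, flux, fstar, matvec, Bmat, jumpz, zvar, mk3, jump, avg, vel, qbu.
rewrite (Hq _ _ HL), (Hq _ _ HR). unfold hbu. unfold hh, hv, bb in *. simpl.
field. repeat split; lra.
Qed.

Theorem mainTheorem10 (g r : R) (qb hb : R -> R -> R) :
  0 < g -> 0 < r ->
  C1_on_admissible qb ->
  (forall h m, 0 < h -> qb h m = (m / h) * hb h m) ->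
  (* (i) consistency *)
  (forall u, admissible u -> forall i,
      DminusSVE g r qb hb u u i = 0 /\ DplusSVE g r qb hb u u i = 0) /\
  (* (ii) *)
  (forall uL uR, admissible uL -> admissible uR -> forall i,
      DminusSVE g r qb hb uL uR i = - DplusSVE g r qb hb uR uL i) /\
  (* (iii) entropy conservation *)
  (forall uL uR, admissible uL -> admissible uR ->
      dot (wvar g r uL) (DminusSVE g r qb hb uL uR)
      + dot (wvar g r uR) (DplusSVE g r qb hb uL uR)
      = eflux g r qb uR - eflux g r qb uL) /\
  (* (iv) dD^-/du_R at u_R = u_L equals A(u_L)/2, entrywise *)
  (forall uL, admissible uL -> forall i j,
      is_derive (fun t => DminusSVE g r qb hb uL (shift uL j t) i) 0
                (/ 2 * Amat g r qb hb uL i j)) /\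
  (* (v) *)
  (forall uL uR, admissible uL -> admissible uR ->
      (forall i, DminusSVE g r qb hb uL uR i + DplusSVE g r qb hb uL uR i
         = jump (flux qb uL i) (flux qb uR i)
           + / 2 * (matvec (Bmat g r hb uL) (jumpz hb uL uR) i
                    + matvec (Bmat g r hb uR) (jumpz hb uL uR) i)) /\
      / 2 * (matvec (Bmat g r hb uL) (jumpz hb uL uR) I2
             + matvec (Bmat g r hb uR) (jumpz hb uL uR) I2)
      = g * (avg (hh uL) (hh uR) + avg (hbu hb uL) (hbu hb uR)) * jump (hh uL) (hh uR)
        + g * (avg (hh uL) (hh uR) + / r * avg (hbu hb uL) (hbu hb uR)) * jump (bb uL) (bb uR)).
Proof.
intros Hg Hr HC Hq. split; [|split; [|split; [|split]]].
- intros u Hu i. unfold admissible, hh in Hu.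
  unfold DminusSVE, DplusSVE, flux, fstar, matvec, Bmat, jumpz, zvar, mk3, jump, avg, vel;
  destruct i; simpl; split; field; unfold hh; repeat split; lra.
- intros uL uR HL HR i. unfold admissible, hh in HL, HR.
  unfold DminusSVE, DplusSVE, flux, fstar, matvec, Bmat, jumpz, zvar, mk3, jump, avg, vel;
  destruct i; simpl; field; unfold hh; repeat split; lra.
- intros; apply p3; auto.
- intros uL HL i j. destruct i.
  + apply t1b.
  + apply t1; auto.
  + apply t3; auto.
- intros uL uR _ _. split.
  + intro i. unfold DminusSVE, DplusSVE, jump. ring.
  + unfold matvec, Bmat, jumpz, zvar, mk3, jump, avg; simpl. field. repeat split; lra.
Qed.
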